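(* Let $A\in\mathbb{R}^{m\times n}$ and let $A=P_1-R_1+S_1=P_2-R_2+S_2$ be two double proper weak splittings of $A$. Let $\widehat{A}=(I-S_2P_1^{\dagger})A$ and $\widehat{P}=P_2$. If $\widehat{A}^{\dagger}\widehat{P}\geq 0$, $N(S_2)\supseteq N(P_2)$, $R(S_2)\subseteq R(P_2)$ and $1\notin\sigma(S_2P_1^{\dagger})$, then $\rho(W_{12})<1$, where $$W_{12}=\begin{pmatrix} P_2^{\dagger}R_2-P_2^{\dagger}S_2P_1^{\dagger}R_1 & P_2^{\dagger}S_2P_1^{\dagger}S_1\\ I & 0\end{pmatrix}.$$
   Context: For $M\in\mathbb{R}^{m\times n}$, $M^{\dagger}$ is its Moore–Penrose inverse, $R(M)$, $N(M)$ its range and null space; inequalities are entrywise; $\rho$ is the spectral radius, $\sigma$ the spectrum. A double splitting $A=P-R+S$ ($P,R,S\in\mathbb{R}^{m\times n}$) is a double proper splitting if $R(P)=R(A)$ and $N(P)=N(A)$; it is a double proper weak splitting if moreover $P^{\dagger}R\geq 0$ and $P^{\dagger}S\leq 0$. *)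

(* Defs.v *)
From HB Require Import structures.
From mathcomp Require Import all_boot all_order all_algebra.
From mathcomp Require Import complex Rstruct.
From Stdlib Require Import Reals.
Set Implicit Arguments. Unset Strict Implicit. Unset Printing Implicit Defensive.
Import Order.TTheory GRing.Theory Num.Theory.
Local Open Scope ring_scope.

Definition is_MP_inverse m n (A : 'M[R]_(m, n)) (X : 'M[R]_(n, m)) : Prop :=
  [/\ A *m X *m A = A, X *m A *m X = X,
      (A *m X)^T = A *m X & (X *m A)^T = X *m A].

Definition range_sub m n k (A : 'M[R]_(m, n)) (B : 'M[R]_(m, k)) : Prop :=
  forall x : 'cV[R]_n, exists y : 'cV[R]_k, A *m x = B *m y.
Definition null_sub m k n (A : 'M[R]_(m, n)) (B : 'M[R]_(k, n)) : Prop :=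
  forall x : 'cV[R]_n, A *m x = 0 -> B *m x = 0.

Definition mx_nonneg m n (M : 'M[R]_(m, n)) : Prop := forall i j, 0 <= M i j.
Definition mx_nonpos m n (M : 'M[R]_(m, n)) : Prop := forall i j, M i j <= 0.

(* double proper splitting A = P - Q + S: R(P) = R(A), N(P) = N(A)
   (Q plays the role of the paper's R, renamed to avoid clashing with the reals). *)
Definition double_proper_splitting m n (A P Q S : 'M[R]_(m, n)) : Prop :=
  [/\ A = P - Q + S,
      range_sub P A /\ range_sub A P &
      null_sub P A /\ null_sub A P].

Definition double_proper_weak_splitting m n (A P Q S : 'M[R]_(m, n))
    (Pd : 'M[R]_(n, m)) : Prop :=
  [/\ double_proper_splitting A P Q S, is_MP_inverse P Pd,
      mx_nonneg (Pd *m Q) & mx_nonpos (Pd *m S)].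

Definition spectrum n (M : 'M[R]_n) : pred R[i] :=
  fun z => root (map_poly (fun x : R => (x%:C)%C) (char_poly M)) z.

Definition spectral_radius_lt1 n (M : 'M[R]_n) : Prop :=
  forall z : R[i], spectrum M z -> `|z| < 1.

(* Main.v *)
Require Import Defs.
From HB Require Import structures.
From mathcomp Require Import all_boot all_order all_algebra.
From mathcomp Require Import complex Rstruct.
From mathcomp Require Import lra.
From Stdlib Require Import Reals.
Import Order.TTheory GRing.Theory Num.Theory.
Local Open Scope ring_scope.

Lemma chartr n (A : 'M[R[i]]_n) : char_poly A^T = char_poly A.
Proof.
rewrite /char_poly -det_tr; congr (\det _); apply/matrixP => i j.
by rewrite !mxE eq_sym.
Qed.

Lemma chartrR n (A : 'M[R]_n) : char_poly A^T = char_poly A.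
Proof.
rewrite /char_poly -det_tr; congr (\det _); apply/matrixP => i j.
by rewrite !mxE eq_sym.
Qed.

Lemma mulmx_ge0v n k (M : 'M[R]_(n,k)) (x : 'cV[R]_k) :
  mx_nonneg M -> (forall j, 0 <= x j 0) -> forall i, 0 <= (M *m x) i 0.
Proof. move=> HM Hx i; rewrite mxE; apply: sumr_ge0 => j _; exact: mulr_ge0. Qed.

Lemma mulmx_lev n k (M : 'M[R]_(n,k)) (x x' : 'cV[R]_k) :
  mx_nonneg M -> (forall j, x j 0 <= x' j 0) -> forall i, (M *m x) i 0 <= (M *m x') i 0.
Proof. move=> HM Hx i; rewrite !mxE; apply: ler_sum => j _; exact: ler_wpM2l. Qed.

Lemma core n (T U K Pi : 'M[R]_n) : mx_nonneg T -> mx_nonneg U -> mx_nonneg K ->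
  K *m (T + U) = K - Pi -> Pi *m (T + U) = T + U ->
  forall y : 'cV[R]_n, (forall i, 0 <= y i 0) ->
    (forall i, y i 0 <= ((T + U) *m y) i 0) -> y = 0.
Proof.
move=> hT hU hK e1 e2 y y0 yV.
have hV : mx_nonneg (T + U) by move=> i j; rewrite mxE addr_ge0.
set w := (T + U) *m y.
have w0 : forall i, 0 <= w i 0 by move=> i; exact: le_trans (y0 i) (yV i).
have d0 : forall i, 0 <= ((T+U) *m w - w) i 0.
  move=> i; have -> : ((T+U) *m w - w) i 0 = ((T+U) *m w) i 0 - w i 0 by rewrite !mxE.
  rewrite subr_ge0; exact: (@mulmx_lev _ _ _ _ _ hV yV i).
have Kd := @mulmx_ge0v _ _ K _ hK d0.
have ePw : Pi *m w = w by rewrite /w mulmxA e2.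
have eK : K *m ((T+U) *m w - w) = - w.
  by rewrite mulmxBr mulmxA e1 mulmxBl ePw addrAC subrr add0r.
have wle0 : forall i, w i 0 = 0.
  move=> i; apply/le_anti; rewrite w0 andbT.
  by have := Kd i; rewrite eK !mxE oppr_ge0.
apply/matrixP => i j; rewrite (ord1 j) !mxE; apply/le_anti; rewrite y0 andbT.
by rewrite -(wle0 i); exact: yV.
Qed.

Lemma spec_lt1 n (T U : 'M[R]_n) : mx_nonneg T -> mx_nonneg U ->
  (forall y : 'cV[R]_n, (forall i, 0 <= y i 0) ->
    (forall i, y i 0 <= ((T + U) *m y) i 0) -> y = 0) ->
  spectral_radius_lt1 (block_mx T U (1%:M : 'M[R]_n) (0 : 'M[R]_n)).
Proof.
move=> hT hU hcore z; rewrite /spectrum.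
set W := block_mx _ _ _ _ => Hz.
have Hz' : root (char_poly (map_mx (real_complex R) W)^T) z.
  by rewrite chartr -map_char_poly.
move: Hz'; rewrite -eigenvalue_root_char => /eigenvalueP [v Hv v0].
set c := v^T.
have Hc : map_mx (real_complex R) W *m c = z *: c.
  by rewrite /c -[LHS]trmxK trmx_mul trmxK Hv linearZ.
rewrite real_ltNge ?normr_real ?real1 //; apply/negP => hz1.
set mu := complex.Re `|z|.
have muE : mu%:C%C = `|z| by rewrite /mu RRe_real ?normr_real.
have mu1 : 1 <= mu by rewrite -lecR muE.
set y : 'cV[R]_(n+n) := \col_i complex.Re `|c i 0|.
have yE : forall i, (y i 0)%:C%C = `|c i 0| by move=> i; rewrite mxE RRe_real ?normr_real.
have y0 : forall i, 0 <= y i 0 by move=> i; rewrite -ler0c yE normr_ge0.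
have hW : mx_nonneg W.
  move=> i j; rewrite /W.
  rewrite -(@splitK n n i) -(@splitK n n j).
  case: (fintype.split i) => i'; case: (fintype.split j) => j'; rewrite /unsplit.
  - rewrite block_mxEul; exact: hT.
  - rewrite block_mxEur; exact: hU.
  - rewrite block_mxEdl mxE; by case: (_ == _).
  - by rewrite block_mxEdr mxE.
have key : forall i, mu * y i 0 <= (W *m y) i 0.
  move=> i; rewrite -lecR rmorphM /= muE yE -normrM.
  move/matrixP: Hc => /(_ i 0); rewrite [X in _ = X]mxE => <-.
  rewrite [(W *m y) i 0]mxE rmorph_sum mxE.
  apply: le_trans (ler_norm_sum _ _ _) _; apply: ler_sum => j _.
  by rewrite mxE normrM -yE rmorphM /= ger0_norm // ler0c.
set y1 := usubmx y; set y2 := dsubmx y.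
have yS : col_mx y1 y2 = y by rewrite vsubmxK.
have key2 : forall i, mu * y i 0 <= (col_mx (T *m y1 + U *m y2) (1%:M *m y1 + 0 *m y2)) i 0.
  by move=> i; rewrite -mul_block_col yS; exact: key.
have e1 : forall i, y1 i 0 = y (lshift n i) 0 by move=> i; rewrite mxE.
have e2 : forall i, y2 i 0 = y (rshift n i) 0 by move=> i; rewrite mxE.
have h1 : forall i, mu * y1 i 0 <= (T *m y1 + U *m y2) i 0.
  by move=> i; have := key2 (lshift n i); rewrite col_mxEu e1.
have h2 : forall i, mu * y2 i 0 <= y1 i 0.
  by move=> i; have := key2 (rshift n i); rewrite col_mxEd mul1mx mul0mx addr0 e2.
have y10 : forall i, 0 <= y1 i 0 by move=> i; rewrite e1.
have y20 : forall i, 0 <= y2 i 0 by move=> i; rewrite e2.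
have y21 : forall i, y2 i 0 <= y1 i 0.
  move=> i; apply: le_trans (h2 i); have := y20 i; nra.
have y1z : y1 = 0.
  apply: hcore => // i; rewrite mulmxDl.
  have := h1 i; have := @mulmx_lev _ _ U _ _ hU y21 i; have := y10 i.
  rewrite !mxE; nra.
have y2z : y2 = 0.
  apply/matrixP => i j; rewrite (ord1 j) [RHS]mxE; apply/le_anti; rewrite y20 andbT.
  have := h2 i; have := y20 i; rewrite y1z; have -> : (0 : 'cV[R]_n) i 0 = 0 by rewrite mxE.
  nra.
have yz : y = 0 by move: yS; rewrite y1z y2z col_mx0 => <-.
move/negP: v0; apply; apply/eqP; apply/matrixP => i j.
have -> : v i j = c j i by rewrite mxE.
rewrite (ord1 i) [RHS]mxE; apply/eqP; rewrite -normr_eq0 -yE yz mxE //.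
Qed.

Lemma mx_ext_cV {m n} (M N : 'M[R]_(m,n)) :
  (forall x : 'cV[R]_n, M *m x = N *m x) -> M = N.
Proof.
move=> H; apply/matrixP => i j; move: (H (delta_mx j 0)).
by rewrite -!colE => /matrixP /(_ i 0); rewrite !mxE.
Qed.

Lemma range_fix {m n k} {B : 'M[R]_(m,k)} {P : 'M[R]_(m,n)} {Pd : 'M[R]_(n,m)} :
  range_sub B P -> P *m Pd *m P = P -> P *m Pd *m B = B.
Proof.
move=> H e; apply: mx_ext_cV => x; case: (H x) => y Hy.
by rewrite -mulmxA Hy mulmxA e.
Qed.

Lemma null_zero {m n k} {B : 'M[R]_(m,n)} {C : 'M[R]_(k,n)} {M : 'M[R]_n} :
  null_sub B C -> B *m M = 0 -> C *m M = 0.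
Proof.
move=> H e; apply: mx_ext_cV => x; rewrite mul0mx -mulmxA; apply: H.
by rewrite mulmxA e mul0mx.
Qed.

Theorem theorem3p2 (m n : nat) (A P1 Q1 S1 P2 Q2 S2 : 'M[R]_(m, n))
    (P1d P2d : 'M[R]_(n, m)) (Ahd : 'M[R]_(n, m)) :
  double_proper_weak_splitting A P1 Q1 S1 P1d ->
  double_proper_weak_splitting A P2 Q2 S2 P2d ->
  is_MP_inverse ((1%:M - S2 *m P1d) *m A) Ahd ->
  mx_nonneg (Ahd *m P2) ->
  null_sub P2 S2 ->   (* N(P2) ⊆ N(S2) *)
  range_sub S2 P2 ->
  ~ spectrum (S2 *m P1d) 1 ->
  spectral_radius_lt1
    (block_mx (P2d *m Q2 - P2d *m S2 *m P1d *m Q1) (P2d *m S2 *m P1d *m S1)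
              (1%:M : 'M[R]_n) (0 : 'M[R]_n)).
Proof.
move=> [[eA1 [r1 r1'] [n1 n1']] [MP1a MP1b MP1c MP1d] Q1p S1n]
       [[eA2 [r2 r2'] [n2 n2']] [MP2a MP2b MP2c MP2d] Q2p S2n]
       [MHa MHb MHc MHd] Kp nS2 rS2 nspec.
set Ah := (1%:M - S2 *m P1d) *m A in MHa MHb MHc MHd *.
have nP1S2 : null_sub P1 S2 by move=> x /n1 /n2' /nS2.
have E0 : S2 *m P1d *m P1 = S2.
  have : S2 *m (1%:M - P1d *m P1) = 0.
    by apply: (null_zero nP1S2); rewrite mulmxBr mulmx1 mulmxA MP1a subrr.
  by rewrite mulmxBr mulmx1 mulmxA => /subr0_eq /esym.
have EhatR : range_sub Ah P2.
  move=> x; case: (r2' x) => y1 Hy1; case: (rS2 (P1d *m (A *m x))) => y2 Hy2.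
  exists (y1 - y2); rewrite /Ah -mulmxA mulmxBl mul1mx -(mulmxA S2) Hy2 Hy1 mulmxBr //.
have EPh : P2 *m P2d *m Ah = Ah := range_fix EhatR MP2a.
have Nhat : null_sub Ah P2.
  move=> x Hx; apply: n2'.
  have hv : A *m x = S2 *m P1d *m (A *m x).
    apply: subr0_eq; rewrite -Hx /Ah. rewrite mulmxBl mul1mx mulmxBl !mulmxA //.
  case: (eqVneq (A *m x) 0) => [//|vn0]; exfalso; apply: nspec.
  have : eigenvalue ((S2 *m P1d)^T) 1.
    apply/eigenvalueP; exists (A *m x)^T; last by rewrite trmx_eq0.
    by rewrite -trmx_mul -hv scale1r.
  rewrite eigenvalue_root_char chartrR => /(rmorph_root (real_complex R)).
  by rewrite rmorph1.
have PAA : P2 *m (Ahd *m Ah) = P2.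
  have : P2 *m (1%:M - Ahd *m Ah) = 0.
    by apply: (null_zero Nhat); rewrite mulmxBr mulmx1 mulmxA MHa subrr.
  by rewrite mulmxBr mulmx1 => /subr0_eq /esym.
have X : Ahd *m Ah *m P2^T = P2^T by rewrite -MHd -trmx_mul PAA.
have PiP : Ahd *m Ah *m P2d = P2d.
  rewrite -{1}MP2b -MP2d trmx_mul (mulmxA (Ahd *m Ah)) (mulmxA (Ahd *m Ah)) X -trmx_mul MP2d MP2b //.
have hT : mx_nonneg (P2d *m Q2 - P2d *m S2 *m P1d *m Q1).
  move=> i j; rewrite -(mulmxA (P2d *m S2)).
  have -> : (P2d *m Q2 - P2d *m S2 *m (P1d *m Q1)) i j =
     (P2d *m Q2) i j - (P2d *m S2 *m (P1d *m Q1)) i j by rewrite !mxE.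
  rewrite subr_ge0; apply: le_trans (Q2p i j).
  rewrite [X in X <= _]mxE; apply: sumr_le0 => k _.
  exact: mulr_le0_ge0.
have hU : mx_nonneg (P2d *m S2 *m P1d *m S1).
  move=> i j; rewrite -(mulmxA (P2d *m S2)) mxE; apply: sumr_ge0 => k _.
  exact: mulr_le0.
have hQ1 : Q1 = P1 + S1 - A.
  apply/matrixP => i j; move/matrixP: eA1 => /(_ i j); rewrite !mxE; lra.
have hQ2 : Q2 = P2 + S2 - A.
  apply/matrixP => i j; move/matrixP: eA2 => /(_ i j); rewrite !mxE; lra.
have E0' : P2d *m S2 *m P1d *m P1 = P2d *m S2.
  by rewrite -mulmxA -mulmxA (mulmxA S2) E0.
have TU : P2d *m Q2 - P2d *m S2 *m P1d *m Q1 + P2d *m S2 *m P1d *m S1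
          = P2d *m P2 - P2d *m Ah.
  rewrite hQ1 hQ2 /Ah !mulmxBr !mulmxDr ?mulmxBl ?mulmxDl ?mul1mx ?mulmxA E0' mulmxBr !mulmxA.
  move: (P2d *m P2) (P2d *m S2) (P2d *m A) (P2d *m S2 *m P1d *m S1)
        (P2d *m S2 *m P1d *m A) => a b c d e.
  apply/matrixP => i j; rewrite !mxE; lra.
have KTU : Ahd *m P2 *m (P2d *m Q2 - P2d *m S2 *m P1d *m Q1 + P2d *m S2 *m P1d *m S1)
           = Ahd *m P2 - Ahd *m Ah.
  rewrite TU mulmxBr -(mulmxA Ahd P2) -(mulmxA Ahd P2).
  by rewrite (mulmxA P2 P2d P2) MP2a (mulmxA P2 P2d Ah) EPh.
have PTU : Ahd *m Ah *m (P2d *m Q2 - P2d *m S2 *m P1d *m Q1 + P2d *m S2 *m P1d *m S1)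
           = P2d *m Q2 - P2d *m S2 *m P1d *m Q1 + P2d *m S2 *m P1d *m S1.
  by rewrite TU mulmxBr !(mulmxA (Ahd *m Ah) P2d) PiP.
apply: spec_lt1 => //.
exact: (@core _ _ _ _ _ hT hU Kp KTU PTU).
Qed.
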